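(* Let $A\in\mathbb{R}^{r\times n}$ ($r\le n$) have full row rank with singular values $\sigma_1\ge\dots\ge\sigma_r>0$, let $F\in\mathbb{R}^{K\times n}$ satisfy $FA^T\neq 0$, and let $D^*=FA^T(AA^T)^{-1}$. Define the spectral risk $\gamma=\|D^*\|_F^2\|A\|_F^2/\|D^*A\|_F^2$ and $\tilde\sigma_i^2=\sigma_i^2/\sum_{j=1}^r\sigma_j^2$. Then $\gamma\ge1$ and $$1\le\frac{1}{\tilde\sigma_1^2}\le\gamma\le\frac{1}{\tilde\sigma_r^2}.$$ Moreover $\gamma=1$ if and only if $r=1$.
   Context: $D^*$ is the minimizer of the linear regression problem $\min_D\|F-DA\|_F^2$; $F$ is an arbitrary target matrix. *)

(* Defs.v *)
From mathcomp Require Import all_boot all_order all_algebra.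
From mathcomp Require Import reals.
Set Implicit Arguments. Unset Strict Implicit. Unset Printing Implicit Defensive.
Import Order.TTheory GRing.Theory Num.Theory.
Local Open Scope ring_scope.

Definition frob2 (R : realType) (m n : nat) (M : 'M[R]_(m, n)) : R :=
  \sum_(i < m) \sum_(j < n) M i j ^+ 2.

Definition rdiag (R : realType) (m n : nat) (s : seq R) : 'M[R]_(m, n) :=
  \matrix_(i < m, j < n) (if (i : nat) == j then s`_i else 0).

Definition singular_values (R : realType) (r n : nat) (A : 'M[R]_(r, n))
    (s : seq R) : Prop :=
  [/\ size s = r, sorted (fun x y => y <= x) s, all (fun x => 0 <= x) s &
      exists (U : 'M[R]_r) (V : 'M[R]_n),
        [/\ U *m U^T = 1%:M, V *m V^T = 1%:M & A = U *m rdiag r n s *m V^T]].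

Definition Dstar (R : realType) (K r n : nat) (F : 'M[R]_(K, n))
    (A : 'M[R]_(r, n)) : 'M[R]_(K, r) :=
  F *m A^T *m invmx (A *m A^T).

Definition spectral_risk (R : realType) (K r n : nat) (F : 'M[R]_(K, n))
    (A : 'M[R]_(r, n)) : R :=
  let D := Dstar F A in frob2 D * frob2 A / frob2 (D *m A).

(* normalized squared singular value tilde sigma_i^2 (0-based index i) *)
Definition nsv2 (R : realType) (s : seq R) (i : nat) : R :=
  s`_i ^+ 2 / \sum_(x <- s) x ^+ 2.

(* Main.v *)
Require Import Defs.
From mathcomp Require Import all_boot all_order all_algebra.
From mathcomp Require Import reals.
From mathcomp Require Import ring lra.
Import Order.TTheory GRing.Theory Num.Theory.
Local Open Scope ring_scope.

Lemma frob2_tr (R : realType) m n (M : 'M[R]_(m, n)) :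
  frob2 M = \tr (M *m M^T).
Proof.
rewrite /frob2 /mxtrace; apply: eq_bigr => i _; rewrite !mxE.
by apply: eq_bigr => j _; rewrite !mxE expr2.
Qed.

Lemma frob2_mulr (R : realType) m n (M : 'M[R]_(m, n)) (Q : 'M[R]_n) :
  Q *m Q^T = 1%:M -> frob2 (M *m Q) = frob2 M.
Proof.
move=> hQ; rewrite !frob2_tr trmx_mul mulmxA -(mulmxA M) hQ mulmx1 //.
Qed.

Lemma frob2_mull (R : realType) m n (M : 'M[R]_(m, n)) (P : 'M[R]_m) :
  P^T *m P = 1%:M -> frob2 (P *m M) = frob2 M.
Proof.
move=> hP; rewrite !frob2_tr trmx_mul mulmxA mxtrace_mulC mulmxA.
by rewrite (mulmxA P^T) hP mul1mx.
Qed.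

Lemma frob2_ge0 (R : realType) m n (M : 'M[R]_(m, n)) : 0 <= frob2 M.
Proof. by apply: sumr_ge0 => i _; apply: sumr_ge0 => j _; apply: sqr_ge0. Qed.

Lemma frob2_eq0 (R : realType) m n (M : 'M[R]_(m, n)) : frob2 M = 0 -> M = 0.
Proof.
move=> h; apply/matrixP => i j; rewrite mxE.
have h1 := psumr_eq0P (fun i _ => sumr_ge0 _ (fun j _ => sqr_ge0 (M i j))) h.
have h2 := psumr_eq0P (fun j _ => sqr_ge0 (M i j)) (h1 i isT).
by apply/eqP; rewrite -sqrf_eq0 h2.
Qed.

Lemma rdiag_mulT (R : realType) r n (s : seq R) : (r <= n)%N ->
  rdiag r n s *m (rdiag r n s)^T = diag_mx (\row_(i < r) s`_i ^+ 2).
Proof.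
move=> hrn; apply/matrixP => i j; rewrite !mxE.
have hi : (i < n)%N by apply: leq_trans (ltn_ord i) hrn.
rewrite (bigD1 (Ordinal hi)) //= big1 ?addr0.
  rewrite !mxE /= eqxx; case: (eqVneq i j) => [<-|nij].
    by rewrite eqxx mulr1n expr2.
  rewrite mulr0n; case: eqP => [/val_inj eij|]; last by rewrite mulr0.
  by rewrite eij eqxx in nij.
move=> l /eqP hl; rewrite !mxE; case: eqP => [eil|]; last by rewrite mul0r.
by case: hl; apply: val_inj; rewrite /= eil.
Qed.

Theorem proposition4 (R : realType) (K r n : nat)
    (A : 'M[R]_(r, n)) (F : 'M[R]_(K, n)) (s : seq R) :
  (r <= n)%N -> \rank A = r ->
  singular_values A s -> 0 < s`_r.-1 ->
  F *m A^T != 0 ->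
  let gamma := spectral_risk F A in
  [/\ 1 <= gamma,
      1 <= (nsv2 s 0)^-1,
      (nsv2 s 0)^-1 <= gamma,
      gamma <= (nsv2 s r.-1)^-1 &
      (gamma = 1 <-> r = 1%N)].
Proof.
move=> hrn _ [hsz hsort hpos [U [V [hU hV hA]]]] hlast hFA gamma.
have hr : (0 < r)%N.
  rewrite lt0n; apply/negP => /eqP h0; move: hlast.
  by rewrite nth_default ?ltxx // hsz h0.
have htr : transitive (fun x y : R => y <= x).
  by move=> y x z hxy hyz; apply: le_trans hyz hxy.
have hmono : forall i j, (i <= j < r)%N -> s`_j <= s`_i.
  move=> i j /andP [hij hj].
  apply: (sorted_leq_nth htr (fun x => lexx x) 0 hsort) => //; rewrite inE hsz //.
  exact: leq_ltn_trans hij hj.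
have hlo : forall i : 'I_r, s`_r.-1 <= s`_i.
  by move=> i; apply: hmono; rewrite -ltnS prednK // ltn_ord leqnn.
have hhi : forall i : 'I_r, s`_i <= s`_0.
  by move=> i; apply: hmono; rewrite leq0n ltn_ord.
have hspos : forall i : 'I_r, 0 < s`_i by move=> i; apply: lt_le_trans (hlo i).
have hUT : U^T *m U = 1%:M by apply: mulmx1C.
have hVT : V^T *m V = 1%:M by apply: mulmx1C.
set Sg := rdiag r n s.
set d := \row_(i < r) s`_i ^+ 2.
have hAA : A *m A^T = U *m diag_mx d *m U^T.
  rewrite hA !trmx_mul trmxK -(@rdiag_mulT _ _ _ s hrn) !mulmxA.
  by rewrite -(mulmxA _ V^T V) hVT mulmx1.
have hMu : A *m A^T \in unitmx.
  rewrite hAA !unitmx_mul; apply/andP; split; [apply/andP; split|].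
  - by case: (mulmx1_unit hU).
  - rewrite unitmxE det_diag unitfE; apply: lt0r_neq0; apply: prodr_gt0 => i _.
    by rewrite mxE exprn_gt0.
  - by case: (mulmx1_unit hU).
set D := Dstar F A.
set g := D *m U.
have hDg : D = g *m U^T by rewrite /g -mulmxA hU mulmx1.
have hDA : D *m A = g *m Sg *m V^T.
  by rewrite hDg hA !mulmxA -(mulmxA g U^T U) hUT mulmx1.
have hFAD : F *m A^T = D *m (A *m A^T).
  by rewrite /D /Dstar mulmxKV.
have hg0 : g != 0.
  apply: contra hFA => /eqP hg; rewrite hFAD hDg hg !mul0mx //.
have fD : frob2 D = frob2 g.
  by rewrite hDg frob2_mulr // trmxK.
have fA : frob2 A = frob2 Sg.
  by rewrite hA frob2_mulr ?trmxK // frob2_mull.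
have fDA : frob2 (D *m A) = \sum_(k < K) \sum_(i < r) g k i ^+ 2 * s`_i ^+ 2.
  rewrite hDA frob2_mulr ?trmxK // frob2_tr trmx_mul mulmxA -(mulmxA g).
  rewrite rdiag_mulT // mul_mx_diag /mxtrace; apply: eq_bigr => k _.
  rewrite mxE; apply: eq_bigr => i _; rewrite !mxE expr2; ring.
have fS : frob2 Sg = \sum_(i < r) s`_i ^+ 2.
  rewrite frob2_tr rdiag_mulT // mxtrace_diag; apply: eq_bigr => i _; rewrite mxE //.
have hSS : \sum_(x <- s) x ^+ 2 = \sum_(i < r) s`_i ^+ 2.
  by rewrite (big_nth 0) hsz big_mkord.
set a := frob2 g.
set b := \sum_(k < K) \sum_(i < r) g k i ^+ 2 * s`_i ^+ 2.
set S := \sum_(i < r) s`_i ^+ 2.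
have ha0 : 0 < a.
  rewrite lt_def frob2_ge0 andbT; apply: contra hg0 => /eqP /frob2_eq0 ->.
  by [].
have hs0 : 0 < s`_0 by apply: hspos (Ordinal hr).
have hm0 : 0 < s`_0 ^+ 2 by rewrite exprn_gt0.
have hmr : 0 < s`_r.-1 ^+ 2 by rewrite exprn_gt0.
have hb1 : b <= a * s`_0 ^+ 2.
  rewrite /a /frob2 mulr_suml; apply: ler_sum => k _; rewrite mulr_suml.
  apply: ler_sum => i _; apply: ler_wpM2l; first exact: sqr_ge0.
  have := hhi i; have := hspos i; move=> h1 h2; nra.
have hb2 : a * s`_r.-1 ^+ 2 <= b.
  rewrite /a /frob2 mulr_suml; apply: ler_sum => k _; rewrite mulr_suml.
  apply: ler_sum => i _; apply: ler_wpM2l; first exact: sqr_ge0.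
  have := hlo i; move=> h1; nra.
have hb0 : 0 < b by apply: lt_le_trans hb2; apply: mulr_gt0.
have hSm0 : s`_0 ^+ 2 <= S.
  rewrite /S (bigD1 (Ordinal hr)) //= lerDl; apply: sumr_ge0 => i _; apply: sqr_ge0.
have hS0 : 0 < S by apply: lt_le_trans hSm0.
have hg : gamma = a * S / b.
  by rewrite /gamma /spectral_risk -/D fD fA fS fDA.
have hn0 : (nsv2 s 0)^-1 = S / s`_0 ^+ 2 by rewrite /nsv2 invf_div hSS.
have hnr : (nsv2 s r.-1)^-1 = S / s`_r.-1 ^+ 2 by rewrite /nsv2 invf_div hSS.
have c1 : 1 <= S / s`_0 ^+ 2 by rewrite ler_pdivlMr // mul1r.
have c2 : S / s`_0 ^+ 2 <= gamma.
  rewrite hg ler_pdivrMr // mulrAC ler_pdivlMr //.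
  have := ler_wpM2l (ltW hS0) hb1; move=> h; nra.
have c3 : gamma <= S / s`_r.-1 ^+ 2.
  rewrite hg ler_pdivrMr // mulrAC ler_pdivlMr //.
  have := ler_wpM2l (ltW hS0) hb2; move=> h; nra.
rewrite hn0 hnr; split => //; first exact: le_trans c1 c2.
split=> [hg1|h1].
  apply/eqP; rewrite eqn_leq hr andbT; apply/negP => /negP; rewrite -ltnNge => h2.
  have : s`_0 ^+ 2 + s`_1 ^+ 2 <= S.
    rewrite /S (bigD1 (Ordinal hr)) //= lerD2l (bigD1 (Ordinal h2)) //= lerDl.
    by apply: sumr_ge0 => i _; apply: sqr_ge0.
  have hs1 : 0 < s`_1 by apply: hspos (Ordinal h2).
  have hs1' : 0 < s`_1 ^+ 2 by rewrite exprn_gt0.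
  have h3 : S <= s`_0 ^+ 2.
    by move: c2; rewrite hg1 ler_pdivrMr // mul1r.
  move=> h4; have h5 : s`_0 ^+ 2 < s`_0 ^+ 2 + s`_1 ^+ 2 by rewrite ltrDl.
  have := lt_le_trans h5 h4.
  by rewrite ltNge h3.
have hSe : S = s`_0 ^+ 2.
  by rewrite /S -hSS (big_nth 0) hsz h1 big_nat1.
apply: le_anti; rewrite (le_trans c1 c2) andbT.
by move: c3; rewrite h1 /= hSe divff // gt_eqF.
Qed.
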